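(* Let $\mu$ be a doubling measure on $\mathbb Z$ with $C^0_\mu=3$, and set $a_j=\mu(j)$. If there is $j_0\in\mathbb Z$ with $a_{j_0}<a_{j_0+1}$, then $a_j<a_{j+1}$ for every $j\le j_0$.
   Context: $\mathbb Z$ is the infinite path graph with edges $\{j,j+1\}$ and distance $|i-j|$. A measure is a weight function $\mu:\mathbb Z\to(0,\infty)$, $\mu(A)=\sum_{v\in A}\mu(v)$; $B(x,r)=\{y:|x-y|\le r\}$; $\mu$ is doubling if $\sup\{\mu(B(x,2k+1))/\mu(B(x,k)):x\in\mathbb Z,k\ge0\}<\infty$; $C^0_\mu=\sup_{x\in\mathbb Z}\mu(B(x,1))/\mu(x)$. *)

(* Defs.v *)
From Stdlib Require Export Reals ZArith.
Open Scope R_scope.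

(* mu(B(x,r)) where B(x,r) = {y : |x - y| <= r} = {x-r, ..., x+r} (2r+1 points) *)
Definition ball_measure (mu : Z -> R) (x : Z) (r : nat) : R :=
  sum_f_R0 (fun i => mu (x - Z.of_nat r + Z.of_nat i)%Z) (2 * r).

Definition positive_measure (mu : Z -> R) : Prop := forall v, 0 < mu v.

Definition doubling (mu : Z -> R) : Prop :=
  exists C : R, forall (x : Z) (k : nat),
    ball_measure mu x (2 * k + 1) / ball_measure mu x k <= C.

Definition C0_is (mu : Z -> R) (c : R) : Prop :=
  is_lub (fun t => exists x : Z, t = ball_measure mu x 1 / mu x) c.

(* Main.v *)
Require Import Defs.
From Stdlib Require Import Reals ZArith Lra Lia.
Open Scope R_scope.

Lemma concave_step (mu : Z -> R) (Hpos : positive_measure mu) (HC0 : C0_is mu 3) (x : Z) :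
  mu (x + 1)%Z - mu x <= mu x - mu (x - 1)%Z.
Proof.
  destruct HC0 as [Hub _].
  assert (H := Hub (ball_measure mu x 1 / mu x) (ex_intro _ x eq_refl)).
  unfold ball_measure in H. simpl in H.
  replace (x - 1 + 0)%Z with (x - 1)%Z in H by ring.
  replace (x - 1 + 1)%Z with x in H by ring.
  replace (x - 1 + 2)%Z with (x + 1)%Z in H by ring.
  pose proof (Hpos x) as Hx.
  apply Rmult_le_compat_r with (r := mu x) in H; [|lra].
  unfold Rdiv in H. rewrite Rmult_assoc, Rinv_l in H by lra. lra.
Qed.

Theorem lemma4p5 (mu : Z -> R) (Hpos : positive_measure mu)
  (Hdoub : doubling mu) (HC0 : C0_is mu 3)
  (j0 : Z) (Hj0 : mu j0 < mu (j0 + 1)%Z) :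
  forall j : Z, (j <= j0)%Z -> mu j < mu (j + 1)%Z.
Proof.
  assert (K : forall n : nat, mu (j0 + 1)%Z - mu j0 <= mu (j0 - Z.of_nat n + 1)%Z - mu (j0 - Z.of_nat n)%Z).
  { induction n.
    - simpl. replace (j0 - 0)%Z with j0 by ring. lra.
    - pose proof (concave_step mu Hpos HC0 (j0 - Z.of_nat n)%Z).
      replace (j0 - Z.of_nat (S n) + 1)%Z with (j0 - Z.of_nat n)%Z by lia.
      replace (j0 - Z.of_nat (S n))%Z with (j0 - Z.of_nat n - 1)%Z by lia.
      lra. }
  intros j Hj.
  specialize (K (Z.to_nat (j0 - j))).
  replace (j0 - Z.of_nat (Z.to_nat (j0 - j)))%Z with j in K by lia.
  lra.
Qed.
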